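(* Fix $a\in\mathbb{C}_v$ and $r>0$, and let $F(z)=\sum_{i\ge0}c_i(z-a)^i\in\mathbb{C}_v[[z-a]]$ converge on $D(a,r)$. If $F'$ has no zeros in $D(a,r)$, then $F$ maps $D(a,\kappa r)$ bijectively onto $D(c_0,|c_1|\kappa r)$.
   Context: $\mathbb{C}_v$ is an algebraically closed field of characteristic zero, complete with respect to a nontrivial non-archimedean absolute value $|\cdot|$; $D(a,r)=\{x\in\mathbb{C}_v:|x-a|<r\}$. Let $p$ be the residue characteristic of $\mathbb{C}_v$; define $\kappa:=|p|^{1/(p-1)}$ if $p>0$ and $\kappa:=1$ if $p=0$ (so $0<\kappa\le1$). *)

(* Defs.v *)
From HB Require Import structures.
From mathcomp Require Import all_boot all_order all_algebra.
From mathcomp Require Import boolp reals exp.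
Set Implicit Arguments. Unset Strict Implicit. Unset Printing Implicit Defensive.
Import Order.TTheory GRing.Theory Num.Theory.
Local Open Scope ring_scope.

Record nonarch_absval (R : realType) (K : fieldType) := NonArchAbsval {
  absv :> K -> R;
  absv_ge0 : forall x, 0 <= absv x;
  absv_eq0 : forall x, absv x = 0 <-> x = 0;
  absvM : forall x y, absv (x * y) = absv x * absv y;
  absv_ultra : forall x y, absv (x + y) <= Num.max (absv x) (absv y);
  absv_nontrivial : exists x, absv x != 0 /\ absv x != 1
}.

Section Defs.
Variables (R : realType) (K : fieldType) (v : nonarch_absval R K).

Definition av_cvg (u : nat -> K) (l : K) : Prop :=
  forall e : R, 0 < e -> exists N : nat, forall n, (N <= n)%N -> v (u n - l) < e.

Definition av_cauchy (u : nat -> K) : Prop :=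
  forall e : R, 0 < e -> exists N : nat, forall m n, (N <= m)%N -> (N <= n)%N ->
    v (u m - u n) < e.

Definition av_complete : Prop :=
  forall u, av_cauchy u -> exists l, av_cvg u l.

Definition disc (a : K) (r : R) : K -> Prop := fun x => v (x - a) < r.

Definition psum (c : nat -> K) (a z : K) (n : nat) : K :=
  \sum_(i < n) c i * (z - a) ^+ i.

(* coefficients of the formal derivative: F'(z) = sum_i (i+1) c_{i+1} (z-a)^i *)
Definition dcoef (c : nat -> K) (i : nat) : K := (i.+1)%:R * c i.+1.

(* residue characteristic p > 0 exists iff |p| < 1 for some prime p *)
Definition resp_spec (p : nat) : Prop := prime p /\ v p%:R < 1.

Definition kappa : R :=
  match pselect (exists p, resp_spec p) with
  | left H => let p := projT1 (cid H) in
              powR (v p%:R) (1 / (p.-1)%:R)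
  | right _ => 1
  end.

End Defs.

(* Main.v *)
Require Import Defs.
From HB Require Import structures.
From mathcomp Require Import all_boot all_order all_algebra.
From mathcomp Require Import boolp reals exp.
From mathcomp.algebra_tactics Require Import ring lra.
From mathcomp Require Import zify.
Import Order.TTheory GRing.Theory Num.Theory.
Local Open Scope ring_scope.
Set Implicit Arguments. Unset Strict Implicit. Unset Printing Implicit Defensive.

Lemma lerX_nn (R : realDomainType) (x y : R) n : 0 <= x -> x <= y -> x ^+ n <= y ^+ n.
Proof. move=> x0 xy; apply: lerXn2r => //; rewrite nnegrE //; exact: le_trans xy. Qed.

Section Basics.
Variables (R : realType) (K : fieldType) (v : nonarch_absval R K).

Lemma v0 : v 0 = 0. Proof. by apply/(absv_eq0 v). Qed.
Lemma v1 : v 1 = 1.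
Proof.
have h1 : v 1 != 0 by apply/eqP => /(absv_eq0 v) /eqP; rewrite oner_eq0.
have : v 1 * v 1 = v 1 * 1 by rewrite -absvM mulr1 mulr1.
by move/(mulfI h1).
Qed.
Lemma vN1 : v (-1) = 1.
Proof.
have h : v (-1) * v (-1) = 1 by rewrite -absvM mulrNN mulr1 v1.
have h0 := absv_ge0 v (-1).
have : (v (-1) - 1) * (v (-1) + 1) = 0 by rewrite mulrDr !mulrBl h; ring.
move/eqP; rewrite mulf_eq0 => /orP[]; first by rewrite subr_eq0 => /eqP.
move=> /eqP h2; lra.
Qed.
Lemma vN x : v (- x) = v x.
Proof. by rewrite -mulN1r absvM vN1 mul1r. Qed.
Lemma vB x y : v (x - y) = v (y - x).
Proof. by rewrite -vN opprB. Qed.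
Lemma vX x n : v (x ^+ n) = v x ^+ n.
Proof. elim: n => [|n IH]; first by rewrite !expr0 v1. by rewrite !exprS absvM IH. Qed.
Lemma vD_le x y B : v x <= B -> v y <= B -> v (x + y) <= B.
Proof. move=> hx hy; apply: le_trans (absv_ultra v x y) _; by rewrite ge_max hx hy. Qed.
Lemma vB_le x y B : v x <= B -> v y <= B -> v (x - y) <= B.
Proof. by move=> hx hy; apply: vD_le => //; rewrite vN. Qed.
Lemma vD_lt x y B : v x < B -> v y < B -> v (x + y) < B.
Proof. move=> hx hy; apply: le_lt_trans (absv_ultra v x y) _; by rewrite gt_max hx hy. Qed.
Lemma vD_dom x y : v y < v x -> v (x + y) = v x.
Proof.
move=> h; apply/eqP; rewrite eq_le; apply/andP; split.
  apply: le_trans (absv_ultra v x y) _; rewrite ge_max lexx; exact: ltW.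
have e : x = (x + y) - y by rewrite addrK.
have := absv_ultra v (x + y) (- y); rewrite -e vN.
rewrite le_max => /orP[] // hh; move: (le_lt_trans hh h); by rewrite ltxx.
Qed.
Lemma v_nat n : v n%:R <= 1.
Proof.
elim: n => [|n IH]; first by rewrite v0.
by rewrite -addn1 natrD; apply: vD_le => //; rewrite v1.
Qed.
Lemma v_sum (I : Type) (r : seq I) (P : pred I) (f : I -> K) B : 0 <= B ->
  (forall i, P i -> v (f i) <= B) -> v (\sum_(i <- r | P i) f i) <= B.
Proof.
move=> B0 h; elim/big_rec: _ => [|i x Pi hx]; first by rewrite v0.
exact: vD_le (h i Pi) hx.
Qed.
Lemma v_sum_lt (I : Type) (r : seq I) (P : pred I) (f : I -> K) B : 0 < B ->
  (forall i, P i -> v (f i) < B) -> v (\sum_(i <- r | P i) f i) < B.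
Proof.
move=> B0 h; elim/big_rec: _ => [|i x Pi hx]; first by rewrite v0.
exact: vD_lt (h i Pi) hx.
Qed.
Lemma v_neq0 x : x != 0 -> 0 < v x.
Proof.
move=> hx; rewrite lt_def absv_ge0 andbT; apply/eqP => /(absv_eq0 v) /eqP.
by rewrite (negPf hx).
Qed.
Lemma vV x : v (x^-1) = (v x)^-1.
Proof.
have [->|hx] := eqVneq x 0; first by rewrite invr0 v0 invr0.
have h : v x * v x^-1 = 1 by rewrite -absvM mulfV // v1.
have hv := v_neq0 hx.
apply: (mulfI (negbT (gt_eqF hv))); by rewrite h mulfV // gt_eqF.
Qed.
Lemma v_div x y : v (x / y) = v x / v y.
Proof. by rewrite absvM vV. Qed.

Lemma cvg_uniq u l1 l2 : av_cvg v u l1 -> av_cvg v u l2 -> l1 = l2.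
Proof.
move=> h1 h2; apply/eqP; rewrite -subr_eq0; apply/negPn/negP => hne.
have hp := v_neq0 hne.
have [N1 HN1] := h1 _ hp; have [N2 HN2] := h2 _ hp.
have a1 := HN1 (maxn N1 N2) (leq_maxl _ _).
have a2 := HN2 (maxn N1 N2) (leq_maxr _ _).
have e : l1 - l2 = - (u (maxn N1 N2) - l1) + (u (maxn N1 N2) - l2).
  by rewrite opprB addrA subrK.
have := vD_lt (B := v (l1 - l2)) (x := - (u (maxn N1 N2) - l1)) (y := u (maxn N1 N2) - l2).
by rewrite vN -e ltxx => /(_ a1 a2).
Qed.

End Basics.

Section Poly.
Variables (R : realType) (K : closedFieldType) (v : nonarch_absval R K).

Definition gb (t B : R) (p : {poly K}) := forall k, v p`_k * t ^+ k <= B.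

Lemma gb_mul t B1 B2 p q : 0 <= t -> 0 <= B1 -> 0 <= B2 ->
  gb t B1 p -> gb t B2 q -> gb t (B1 * B2) (p * q).
Proof.
move=> t0 B10 B20 hp hq k; rewrite coefM.
have hB : 0 <= B1 * B2 by rewrite mulr_ge0.
have [tk0|tk] := eqVneq (t ^+ k) 0; first by rewrite tk0 mulr0.
have tkp : 0 < t ^+ k by rewrite lt_def tk exprn_ge0.
rewrite -ler_pdivlMr //; apply: v_sum; first by rewrite divr_ge0 // exprn_ge0.
move=> j _; rewrite ler_pdivlMr // absvM.
have jk : (j <= k)%N by rewrite -ltnS.
have -> : t ^+ k = t ^+ j * t ^+ (k - j) by rewrite -exprD subnKC.
rewrite mulrACA.
by apply: ler_pM; rewrite ?mulr_ge0 ?absv_ge0 ?exprn_ge0.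
Qed.

Lemma gb_XsubC t g : 0 <= t -> t <= v g -> gb t (v g) ('X - g%:P).
Proof.
move=> t0 tg [|[|k]]; rewrite coefB coefX coefC /=.
- by rewrite sub0r vN expr0 mulr1.
- by rewrite subr0 v1 mul1r expr1.
- by rewrite subr0 v0 mul0r absv_ge0.
Qed.

Lemma gb_1 t : gb t 1 1.
Proof. by move=> [|k]; rewrite coefC /= ?v1 ?expr0 ?mulr1 // v0 mul0r. Qed.

Lemma gb_scale t B c p : 0 <= B -> gb t B p -> gb t (v c * B) (c *: p).
Proof. by move=> B0 h k; rewrite coefZ absvM -mulrA ler_wpM2l ?absv_ge0. Qed.

Lemma gb_prod t (s : seq K) : 0 <= t -> (forall g, g \in s -> t <= v g) ->
  gb t (\prod_(g <- s) v g) (\prod_(g <- s) ('X - g%:P)).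
Proof.
move=> t0; elim: s => [|g s IH] hs; first by rewrite !big_nil; apply: gb_1.
rewrite !big_cons; apply: gb_mul => //; first exact: absv_ge0.
  by apply: prodr_ge0 => i _; apply: absv_ge0.
  by apply: gb_XsubC => //; apply: hs; rewrite mem_head.
by apply: IH => h hh; apply: hs; rewrite inE hh orbT.
Qed.

Lemma v_prod (s : seq K) (f : K -> K) : v (\prod_(g <- s) f g) = \prod_(g <- s) v (f g).
Proof. by elim: s => [|g s IH]; rewrite ?big_nil ?v1 // !big_cons absvM IH. Qed.

Lemma taylor_coef (p : {poly K}) (a : K) k : (p \Po ('X + a%:P))`_k = p^`N(k).[a].
Proof.
elim/poly_ind: p k => [|p c IH] k.
  by rewrite comp_poly0 coef0 (@nderivn_poly0 _ (0 : {poly K}) k) ?horner0 // size_poly0.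
rewrite comp_poly_MXaddC mulrDr coefD coefD coefMX coefMC coefC.
case: k => [|k] /=.
  by rewrite add0r nderivn0 hornerMXaddC IH nderivn0.
by rewrite addr0 nderivnMXaddC hornerD hornerMX !IH.
Qed.

Lemma seq_min (s : seq K) (f : K -> R) : s != [::] ->
  exists2 b, b \in s & forall g, g \in s -> f b <= f g.
Proof.
elim: s => [|g s IH] // _.
have [->|ne] := eqVneq s [::].
  by exists g; rewrite ?mem_head // => h; rewrite inE => /eqP ->.
have [b bs hb] := IH ne.
have [le|lt] := leP (f g) (f b).
  exists g; first by rewrite mem_head.
  move=> h; rewrite inE => /orP[/eqP ->//|hs]; exact: le_trans le (hb h hs).
exists b; first by rewrite inE bs orbT.
move=> h; rewrite inE => /orP[/eqP ->|hs]; [exact: ltW|exact: hb].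
Qed.

Lemma root_step (P : {poly K}) (al : K) (s M : R) (D : nat) : 0 < s -> 0 < M ->
  (0 < D)%N -> v P`_D * s ^+ D = M -> (forall i, (D < i)%N -> v P`_i * s ^+ i < M) ->
  v al <= s -> exists b, root P b /\ M * v (b - al) ^+ D <= v P.[al] * s ^+ D.
Proof.
move=> s0 M0 D0 hD hi hal.
have sD : 0 < s ^+ D by rewrite exprn_gt0.
have PD0 : P`_D != 0.
  apply/eqP => h; move: hD; rewrite h v0 mul0r => h'; move: M0; by rewrite -h' ltxx.
have szP : (1 < size P)%N.
  have : (D < size P)%N by rewrite ltnNge; apply/negP => /(nth_default 0) h; move: PD0; rewrite h eqxx.
  by apply: leq_trans; rewrite ltnS.
have [rs Hrs] := closed_field_poly_normal P.
have rsn : rs != [::].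
  apply/eqP => e; move: szP; rewrite Hrs e big_nil -mul_polyC mulr1 size_polyC.
  by case: (_ != 0).
have lc0 : lead_coef P != 0 by rewrite lead_coef_eq0 -size_poly_gt0 ltnW.
have [b brs hb] := seq_min (fun g => v (g - al)) rsn.
exists b; split.
  by rewrite /root Hrs hornerZ horner_prod; apply/eqP; apply/eqP; rewrite mulf_eq0; apply/orP; right;
    rewrite (big_rem b) //= hornerXsubC subrr mul0r.
set t := v (b - al).
have t0 : 0 <= t by apply: absv_ge0.
set Q := P \Po ('X + al%:P).
have HQ : Q = lead_coef P *: \prod_(g <- rs) ('X - (g - al)%:P).
  rewrite /Q {1}Hrs comp_polyZ; congr (_ *: _).
  elim: rs {Hrs rsn brs hb} => [|g s' IH]; first by rewrite !big_nil comp_polyC.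
  rewrite !big_cons comp_polyM IH; congr (_ * _).
  by rewrite comp_polyB comp_polyX comp_polyC polyCB opprB addrA.
have gQ : gb t (v (lead_coef P) * \prod_(g <- rs) v (g - al)) Q.
  rewrite HQ; apply: gb_scale; first by apply: prodr_ge0 => i _; apply: absv_ge0.
  have := gb_prod (s := [seq g - al | g <- rs]) t0.
  rewrite !big_map; apply => g /mapP [g' g'rs ->]; exact: hb.
have Pal : v P.[al] = v (lead_coef P) * \prod_(g <- rs) v (g - al).
  rewrite {1}Hrs hornerZ horner_prod absvM v_prod; congr (_ * _).
  by apply: eq_bigr => g _; rewrite hornerXsubC vB.
have QD : v Q`_D = v P`_D.
  rewrite taylor_coef (horner_coef_wide _ (leqnSn (size (P^`N(D))))) big_ord_recl.
  rewrite coef_nderivn addn0 binn mulr1n expr0 mulr1 vD_dom //.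
  have PDp : 0 < v P`_D by apply: v_neq0.
  apply: v_sum_lt => // j _; rewrite coef_nderivn /=.
  have -> : bump 0 j = j.+1 by [].
  rewrite -mulr_natr !absvM vX.
  have h1 : v P`_(D + j.+1) * s ^+ (D + j.+1) < M by apply: hi; rewrite -addSnnS leq_addr.
  rewrite -(ltr_pM2r sD) hD; apply: le_lt_trans h1.
  rewrite exprD -!mulrA; apply: ler_wpM2l; first exact: absv_ge0.
  have hC := v_nat v 'C(D + j.+1, D).
  have ha : v al ^+ j.+1 <= s ^+ j.+1 by apply: lerX_nn; rewrite ?absv_ge0.
  have hh : v 'C(D + j.+1, D)%:R * v al ^+ j.+1 <= 1 * s ^+ j.+1.
    by apply: ler_pM => //; rewrite ?exprn_ge0 ?absv_ge0.
  rewrite mul1r in hh; rewrite mulrA [X in _ <= X]mulrC; apply: ler_wpM2r => //.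
  by rewrite exprn_ge0 // ltW.
have := gQ D; rewrite QD -Pal => h.
rewrite -hD mulrAC; apply: ler_wpM2r; first exact: ltW.
exact: h.
Qed.

End Poly.

Lemma fin_max (R : realDomainType) (f : nat -> R) N :
  exists2 j, (j <= N)%N & forall k, (k <= N)%N -> f k <= f j.
Proof.
elim: N => [|N [j hj hk]]; first by exists 0%N => // k; rewrite leqn0 => /eqP ->.
have [le|lt] := leP (f N.+1) (f j).
  exists j; first exact: leqW.
  move=> k; rewrite leq_eqVlt => /orP[/eqP ->//|]; rewrite ltnS; exact: hk.
exists N.+1 => // k; rewrite leq_eqVlt => /orP[/eqP ->//|]; rewrite ltnS => kN.
exact: le_trans (hk _ kN) (ltW lt).
Qed.

Lemma last_idx (Q : nat -> Prop) N : (exists j, (j < N)%N /\ Q j) ->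
  exists j, [/\ (j < N)%N, Q j & forall k, (j < k)%N -> (k < N)%N -> ~ Q k].
Proof.
elim: N => [[j []]//|N IH [j [jN Qj]]].
have [QN|nQN] := pselect (Q N).
  exists N; split => // k Nk; rewrite ltnS => kN; move: (leq_ltn_trans kN Nk); by rewrite ltnn.
have jN' : (j < N)%N.
  move: jN; rewrite ltnS leq_eqVlt => /orP[/eqP e|//]; by move: nQN; rewrite -e.
have [j' [j'N Qj' hj']] := IH (ex_intro _ j (conj jN' Qj)).
exists j'; split => //; first exact: ltnW.
move=> k jk; rewrite ltnS leq_eqVlt => /orP[/eqP ->//|]; exact: hj'.
Qed.

Section Series.
Variables (R : realType) (K : closedFieldType) (v : nonarch_absval R K).

Definition ps (b : nat -> K) (x : K) (n : nat) := \sum_(i < n) b i * x ^+ i.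
Definition tends0 (w : nat -> R) :=
  forall e, 0 < e -> exists N, forall n, (N <= n)%N -> w n < e.

Lemma ps_split b x n m : (n <= m)%N ->
  ps b x m - ps b x n = \sum_(n <= i < m) b i * x ^+ i.
Proof.
move=> nm; rewrite /ps -!(big_mkord xpredT (fun i => b i * x ^+ i)).
by rewrite (big_cat_nat (n := n)) //= addrAC subrr add0r.
Qed.

Lemma ps_S b x n : ps b x n.+1 = ps b x n + b n * x ^+ n.
Proof. by rewrite /ps big_ord_recr. Qed.

Lemma ps0 b n : ps b 0 n.+1 = b 0%N.
Proof.
rewrite /ps big_ord_recl expr0 mulr1 big1 ?addr0 // => i _.
by rewrite expr0n /= mulr0.
Qed.

Lemma terms_of_cvg b x l : av_cvg v (ps b x) l -> tends0 (fun n => v (b n) * v x ^+ n).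
Proof.
move=> h e e0; have [N hN] := h e e0; exists N => n nN.
have e1 : b n * x ^+ n = (ps b x n.+1 - l) - (ps b x n - l).
  by rewrite ps_S opprB addrA subrK addrAC subrr add0r.
rewrite -vX -absvM e1; apply: vD_lt; rewrite ?vN; apply: hN => //; exact: leqW.
Qed.

Lemma cvg_of_terms (Hc : av_complete v) b x s : tends0 (fun n => v (b n) * s ^+ n) ->
  v x <= s -> exists l, av_cvg v (ps b x) l.
Proof.
move=> ht xs; apply: Hc => e e0; have [N hN] := ht e e0; exists N.
have key : forall m n, (N <= n)%N -> (n <= m)%N -> v (ps b x m - ps b x n) < e.
  move=> m n Nn nm; rewrite ps_split // big_nat_cond; apply: v_sum_lt => // i.
  rewrite andbT => /andP[ni _]; rewrite absvM vX.
  apply: le_lt_trans (hN i (leq_trans Nn ni)); apply: ler_wpM2l; first exact: absv_ge0.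
  by apply: lerX_nn; rewrite ?absv_ge0.
move=> m n Nm Nn; have [nm|mn] := leqP n m; first exact: key.
by rewrite vB; apply: key => //; exact: ltnW.
Qed.

Lemma lim_le u l y B N : av_cvg v u l -> (forall n, (N <= n)%N -> v (u n - y) <= B) ->
  v (l - y) <= B.
Proof.
move=> hc hb; have B0 : 0 <= B by apply: le_trans (hb N (leqnn N)); exact: absv_ge0.
rewrite leNgt; apply/negP => hlt.
have e0 : 0 < v (l - y) by exact: le_lt_trans hlt.
have [N' hN'] := hc _ e0.
set n := maxn N N'.
have h1 := hN' n (leq_maxr _ _); have h2 := hb n (leq_maxl _ _).
have e1 : l - y = - (u n - l) + (u n - y) by rewrite opprB addrA subrK.
have := vD_lt (v := v) (x := - (u n - l)) (y := u n - y) (B := v (l - y)).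
by rewrite vN -e1 ltxx => /(_ h1 (le_lt_trans h2 hlt)).
Qed.

Lemma powdiff x y s i : 0 <= s -> v x <= s -> v y <= s ->
  v (x ^+ i - y ^+ i) <= v (x - y) * s ^+ i.-1.
Proof.
move=> s0 xs ys; rewrite subrXX absvM; apply: ler_wpM2l; first exact: absv_ge0.
apply: v_sum; first exact: exprn_ge0.
move=> j _; rewrite absvM !vX.
have ji : (j <= i.-1)%N by rewrite -ltnS; case: i j => [[]|i j] //=.
have -> : s ^+ i.-1 = s ^+ (i.-1 - j) * s ^+ j by rewrite -exprD subnK.
by apply: ler_pM; rewrite ?exprn_ge0 ?absv_ge0 //; apply: lerX_nn; rewrite ?absv_ge0.
Qed.

Lemma root_exists (Hc : av_complete v) b s : 0 < s -> tends0 (fun n => v (b n) * s ^+ n) ->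
  (exists i, v (b 0%N) < v (b i) * s ^+ i) -> exists2 al, v al <= s & av_cvg v (ps b al) 0.
Proof.
move=> s0 ht [i0 hi0].
pose t := fun n => v (b n) * s ^+ n.
have t0 : forall n, 0 <= t n by move=> n; rewrite /t mulr_ge0 ?absv_ge0 ?exprn_ge0 // ltW.
have et0 : t 0%N = v (b 0%N) by rewrite /t expr0 mulr1.
have ti0 : 0 < t i0 by apply: le_lt_trans hi0; exact: absv_ge0.
have [N0 hN0] := ht _ ti0.
have i0N : (i0 < N0)%N by rewrite ltnNge; apply/negP => /hN0; rewrite ltxx.
have [j jN hj] := fin_max t N0.
have hjall : forall k, t k <= t j.
  move=> k; have [kN|Nk] := leqP k N0; first exact: hj.
  apply: ltW; apply: lt_le_trans (hN0 _ (ltnW Nk)) _; apply: hj; exact: ltnW.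
have [D [DN tD hD]] := @last_idx (fun k => t k = t j) N0.+1 (ex_intro _ j (conj jN erefl)).
set M := t j.
have hgt : forall k, (D < k)%N -> t k < M.
  move=> k Dk; have [kN|Nk] := leqP k N0.
    rewrite lt_def hjall andbT; apply/eqP => e; by case: (hD k Dk kN (esym e)).
  exact: lt_le_trans (hN0 k (ltnW Nk)) (hjall i0).
have M0 : 0 < M by apply: lt_le_trans ti0 (hjall i0).
have D0 : (0 < D)%N.
  rewrite lt0n; apply/eqP => e; move: tD; rewrite e et0 => e'.
  by move: (lt_le_trans hi0 (hjall i0)); rewrite -e' ltxx.
have MD : v (b D) * s ^+ D = M by [].
pose P := fun N => \poly_(i < N) b i.
have hP : forall N x, (P N).[x] = ps b x N by move=> N x; rewrite horner_poly.
have step : forall N al, (D < N)%N -> v al <= s ->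
    exists be, root (P N) be /\ M * v (be - al) ^+ D <= v (ps b al N) * s ^+ D.
  move=> N al DN' als; rewrite -hP; apply: root_step => //.
    by rewrite coef_poly DN'.
  move=> i Di; rewrite coef_poly; case: ifP => _; first exact: hgt.
  by rewrite v0 mul0r.
have sD : 0 < s ^+ D by rewrite exprn_gt0.
have nn : forall x : R, 0 <= x -> x \is Num.nneg by [].
have v0s : v 0 <= s by rewrite v0 ltW.
have [be0 [rbe0 hbe0]] := step D.+1 0 (ltnSn D) v0s.
have be0s : v be0 <= s.
  rewrite subr0 ps0 in hbe0.
  have h1 : M * v be0 ^+ D < M * s ^+ D.
    apply: le_lt_trans hbe0 _; rewrite ltr_pM2r //; exact: lt_le_trans hi0 (hjall i0).
  rewrite ltr_pM2l // ltr_pXn2r ?nn ?absv_ge0 ?(ltW s0) // in h1; exact: ltW.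
have ps_be0 : ps b be0 D.+1 = 0 by rewrite -hP; apply/eqP.
have hg : forall p : nat * K, exists be, ((D < p.1)%N /\ v p.2 <= s /\ ps b p.2 p.1 = 0) ->
    [/\ ps b be p.1.+1 = 0, v be <= s & M * v (be - p.2) ^+ D <= t p.1 * s ^+ D].
  move=> [N al] /=.
  have [[DN' [als hps]]|nh] := pselect ((D < N)%N /\ v al <= s /\ ps b al N = 0); last first.
    by exists al => h; case: (nh h).
  have [be [rbe hbe]] := step N.+1 al (leqW DN') als.
  rewrite ps_S hps add0r absvM vX in hbe.
  have hbe' : M * v (be - al) ^+ D <= t N * s ^+ D.
    apply: le_trans hbe _; apply: ler_wpM2r; first exact: ltW.
    rewrite /t; apply: ler_wpM2l; first exact: absv_ge0.
    by apply: lerX_nn; rewrite ?absv_ge0.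
  exists be => _; split => //; first by rewrite -hP; apply/eqP.
  have h2 : v (be - al) ^+ D <= s ^+ D.
    rewrite -(ler_pM2l M0); apply: le_trans hbe' _; apply: ler_wpM2r; first exact: ltW.
    exact: hjall.
  rewrite ler_pXn2r ?nn ?absv_ge0 ?(ltW s0) // in h2.
  have -> : be = (be - al) + al by rewrite subrK.
  by apply: vD_le.
have [g hg'] := choice hg.
pose A := fix A k := if k is k'.+1 then g (D.+1 + k', A k')%N else be0.
have Inv : forall k, ps b (A k) (D.+1 + k) = 0 /\ v (A k) <= s.
  elim=> [|k [IH1 IH2]]; first by rewrite addn0.
  have [h1 h2 _] := hg' (D.+1 + k, A k)%N (conj (leq_trans (ltnSn D) (leq_addr _ _)) (conj IH2 IH1)).
  by rewrite addnS; split.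
have Dif : forall k, M * v (A k.+1 - A k) ^+ D <= t (D.+1 + k)%N * s ^+ D.
  move=> k; have [IH1 IH2] := Inv k.
  by have [_ _ h3] := hg' (D.+1 + k, A k)%N (conj (leq_trans (ltnSn D) (leq_addr _ _)) (conj IH2 IH1)).
have dsmall : forall e, 0 < e -> exists K0, forall k, (K0 <= k)%N -> v (A k.+1 - A k) < e.
  move=> e e0.
  have e'0 : 0 < M * e ^+ D / s ^+ D by rewrite divr_gt0 // mulr_gt0 // exprn_gt0.
  have [N hN] := ht _ e'0; exists N => k Nk.
  have h1 := Dif k.
  have h2 : t (D.+1 + k)%N < M * e ^+ D / s ^+ D by apply: hN; apply: leq_trans Nk (leq_addl _ _).
  rewrite -(ltr_pM2r sD) divfK ?gt_eqF // in h2.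
  have h3 := le_lt_trans h1 h2.
  rewrite ltr_pM2l // ltr_pXn2r ?nn ?absv_ge0 ?(ltW e0) // in h3.
have cau : av_cauchy v A.
  move=> e e0; have [K0 hK0] := dsmall e e0.
  have key : forall n j, (K0 <= n)%N -> v (A (n + j)%N - A n) < e.
    move=> n; elim=> [|jj IH] Kn; first by rewrite addn0 subrr v0.
    have -> : A (n + jj.+1)%N - A n = (A (n + jj).+1 - A (n + jj)%N) + (A (n + jj)%N - A n).
      by rewrite addnS addrA subrK.
    apply: vD_lt; last exact: IH.
    apply: hK0; exact: leq_trans Kn (leq_addr _ _).
  exists K0 => m n Km Kn; have [nm|mn] := leqP n m.
    by rewrite -(subnKC nm); apply: key.
  by rewrite vB -(subnKC (ltnW mn)); apply: key.
have [al hal] := Hc A cau.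
have als : v al <= s.
  rewrite -(subr0 al); apply: (lim_le (N := 0%N) hal) => n _; rewrite subr0.
  by case: (Inv n).
exists al => // e e0.
have [Nt hNt] := ht e e0.
have ee0 : 0 < e * s / M by rewrite divr_gt0 // mulr_gt0.
have [Nk hNk] := hal _ ee0.
set k := maxn Nt Nk.
exists (D.+1 + k)%N => n Nn.
set N := (D.+1 + k)%N.
have [Ik _] := Inv k.
have e1 : ps b al n - 0 = (ps b al n - ps b al N) + (ps b al N - ps b (A k) N).
  by rewrite Ik !subr0 subrK.
rewrite e1; apply: vD_lt.
  rewrite ps_split // big_nat_cond; apply: v_sum_lt => // i.
  rewrite andbT => /andP[ni _]; rewrite absvM vX.
  apply: le_lt_trans (hNt i _); last first.
    apply: leq_trans ni; apply: leq_trans (leq_maxl Nt Nk) (leq_addl _ _).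
  apply: ler_wpM2l; first exact: absv_ge0.
  by apply: lerX_nn; rewrite ?absv_ge0.
have ed : ps b al N - ps b (A k) N = \sum_(i < N) b i * (al ^+ i - A k ^+ i).
  by rewrite /ps -sumrB; apply: eq_bigr => i _; rewrite mulrBr.
rewrite ed; apply: v_sum_lt => // i _.
have hd : v (al - A k) < e * s / M by rewrite vB; apply: hNk; exact: leq_maxr.
have [IA1 IA2] := Inv k.
have hp := powdiff i (ltW s0) als IA2.
rewrite absvM.
case: (nat_of_ord i) hp => [|i'] hp.
  by rewrite !expr0 subrr v0 mulr0.
rewrite /= in hp.
have h1 : v (b i'.+1) * v (al ^+ i'.+1 - A k ^+ i'.+1) <= v (b i'.+1) * (v (al - A k) * s ^+ i').
  by apply: ler_wpM2l => //; exact: absv_ge0.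
apply: le_lt_trans h1 _.
rewrite -(ltr_pM2r s0).
have -> : v (b i'.+1) * (v (al - A k) * s ^+ i') * s = v (al - A k) * (v (b i'.+1) * s ^+ i'.+1).
  by rewrite exprSr; ring.
have h2 : v (b i'.+1) * s ^+ i'.+1 <= M by apply: hjall.
have h3 : v (al - A k) * (v (b i'.+1) * s ^+ i'.+1) <= v (al - A k) * M.
  by apply: ler_wpM2l => //; exact: absv_ge0.
apply: le_lt_trans h3 _.
by rewrite -ltr_pdivlMr.
Qed.

End Series.

Lemma bern_nat p e : (1 < p)%N -> ((p.-1 * e).+1 <= p ^ e)%N.
Proof.
move=> p1; elim: e => [|e IH]; first by rewrite muln0 expn0.
rewrite expnS; have h : (1 <= p ^ e)%N by rewrite expn_gt0; case: p p1 IH.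
nia.
Qed.

Lemma mul_le1_lt1 (R : realDomainType) (x y : R) : 0 <= x -> x <= 1 -> 0 <= y -> y < 1 -> x * y < 1.
Proof. move=> *; nra. Qed.

Section Kappa.
Variables (R : realType) (K : fieldType) (v : nonarch_absval R K).

Lemma v_natM m n : v (m * n)%:R = v m%:R * v n%:R.
Proof. by rewrite natrM absvM. Qed.

Lemma v_one_if m : (0 < m)%N -> (forall q, prime q -> (q %| m)%N -> v q%:R = 1) -> v m%:R = 1.
Proof.
elim: m {-2}m (leqnn m) => [|M IH] m mM m0 hq; first by move: mM m0; rewrite leqn0 => /eqP ->.
have [m1|m1] := leqP m 1.
  have -> : m = 1%N by apply/eqP; rewrite eqn_leq m1 m0.
  by rewrite v1.
have pq := pdiv_prime m1.
have dq := pdiv_dvd m.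
rewrite -(divnK dq) v_natM (hq _ pq dq) mulr1.
apply: IH.
- rewrite -ltnS; apply: leq_trans mM; apply: ltn_Pdiv => //; exact: prime_gt1.
- by rewrite divn_gt0 ?prime_gt0 // dvdn_leq.
- move=> q qp qd; apply: hq => //; apply: dvdn_trans qd _; exact: dvdn_div.
Qed.

Lemma v_prime_other p q : prime p -> prime q -> p != q -> v p%:R < 1 -> v q%:R = 1.
Proof.
move=> pp qp pq vp; apply/eqP; rewrite eq_le v_nat leNgt; apply/negP => vq.
have p0 : (0 < p)%N by exact: prime_gt0.
case: (egcdnP q p0) => km kn e _.
have g1 : gcdn p q = 1%N.
  apply/eqP; rewrite -/(coprime p q) prime_coprime // dvdn_prime2 //.
have e' : (1 : K) = (km * p)%:R - (kn * q)%:R by rewrite e g1 natrD addrAC subrr add0r.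
have : v (1 : K) < 1.
  rewrite e'; apply: vD_lt; rewrite ?vN v_natM.
    by apply: mul_le1_lt1; rewrite ?absv_ge0 ?v_nat.
  by apply: mul_le1_lt1; rewrite ?absv_ge0 ?v_nat.
by rewrite v1 ltxx.
Qed.

Lemma kappa_spec (Hchar0 : [pchar K] =i pred0) :
  [/\ 0 < kappa v, kappa v <= 1 & forall i, (0 < i)%N -> kappa v ^+ i.-1 <= v i%:R].
Proof.
have nz : forall n, (0 < n)%N -> (n%:R : K) != 0.
  by move=> n n0; move/pcharf0P: Hchar0 => ->; rewrite -lt0n.
rewrite /kappa; case: pselect => [H|H]; last first.
  have hv : forall i, (0 < i)%N -> v i%:R = 1.
    move=> i i0; apply: v_one_if => // q qp _; apply/eqP; rewrite eq_le v_nat leNgt.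
    by apply/negP => h; apply: H; exists q.
  by split => // i i0; rewrite expr1n hv.
case: (cid H) => p [pp vp] /=.
have p1 := prime_gt1 pp.
have vp0 : 0 < v p%:R by apply: v_neq0; apply: nz; exact: prime_gt0.
set k := powR (v p%:R) (1 / (p.-1)%:R).
have k0 : 0 < k by apply: powR_gt0.
have kp : k ^+ p.-1 = v p%:R.
  rewrite /k -powR_mulrn; last exact: ltW.
  rewrite -powRrM mul1r mulVf ?powRr1 ?(ltW vp0) //.
  by rewrite pnatr_eq0 -lt0n; case: p p1 {pp vp vp0 k k0}.
have k1 : k <= 1.
  rewrite leNgt; apply/negP => h.
  have := exprn_ege1 p.-1 (ltW h); rewrite kp => h'.
  by move: (le_lt_trans h' vp); rewrite ltxx.
split => // i i0.
have [m cm ei] := pfactor_coprime pp i0.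
set e := logn p i in ei.
have vm : v m%:R = 1.
  have m0 : (0 < m)%N by move: i0; rewrite ei muln_gt0 => /andP[].
  apply: v_one_if => // q qp qm; apply: (v_prime_other pp qp) => //.
  apply/eqP => e'; move: cm; rewrite prime_coprime // e' qm.
  by [].
have -> : v i%:R = k ^+ (p.-1 * e) by rewrite ei v_natM vm mul1r natrX vX exprM kp.
apply: ler_wiXn2l; rewrite ?(ltW k0) //.
have hb := bern_nat e p1.
have hm : (0 < m)%N by move: i0; rewrite ei muln_gt0 => /andP[].
rewrite ei; nia.
Qed.

End Kappa.

Lemma bern_real (R : realDomainType) (h : R) n : 0 <= h -> 1 + n%:R * h <= (1 + h) ^+ n.
Proof.
move=> h0; elim: n => [|n IH]; first by rewrite mul0r addr0 expr0.
rewrite exprS -natr1.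
have hn : 0 <= n%:R * h :> R by rewrite mulr_ge0.
have : (1 + n%:R * h) * (1 + h) <= (1 + h) * (1 + h) ^+ n.
  by rewrite mulrC; apply: ler_wpM2l => //; lra.
nra.
Qed.

Lemma geo (R : realType) (th e : R) : 0 <= th -> th < 1 -> 0 < e -> exists n, th ^+ n < e.
Proof.
move=> th0 th1 e0.
have [->|thn] := eqVneq th 0; first by exists 1%N; rewrite expr1.
have thp : 0 < th by rewrite lt_def thn th0.
set h := th^-1 - 1.
have hp : 0 < h by rewrite /h subr_gt0 invf_gt1.
have ehp : 0 <= (e * h)^-1 by rewrite invr_ge0 ltW // mulr_gt0.
set n := Num.Def.archi_bound (e * h)^-1.
have hn := archi_boundP ehp.
exists n.
have b := bern_real n (ltW hp).
have e1 : 1 + h = th^-1 by rewrite /h addrC subrK.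
rewrite e1 exprVn in b.
have thn0 : 0 < th ^+ n by rewrite exprn_gt0.
have h1 : th ^+ n * (1 + n%:R * h) <= 1 by apply: le_trans (ler_wpM2l (ltW thn0) b) _; rewrite mulfV ?gt_eqF.
have E : (e * h)^-1 * h = e^-1 by rewrite invfM -mulrA mulVf ?mulr1 // gt_eqF.
have h2 : e^-1 < n%:R * h by rewrite -E ltr_pM2r.
have h3 : e * e^-1 < e * (n%:R * h) by rewrite ltr_pM2l.
rewrite mulfV ?gt_eqF // in h3.
have h4 : 1 < e * (1 + n%:R * h) by rewrite mulrDr mulr1; lra.
have h5 : 0 < 1 + n%:R * h by have := mulr_ge0 (ler0n R n) (ltW hp); lra.
nra.
Qed.

Section Dense.
Variables (R : realType) (K : closedFieldType) (v : nonarch_absval R K).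

Lemma nth_root (y : K) n : (0 < n)%N -> exists u, u ^+ n = y.
Proof.
move=> n0; have [x hx] := @solve_monicpoly K n (fun i => if i == 0%N then y else 0) n0.
exists x; rewrite hx; case: n n0 {hx} => // n _.
rewrite big_ord_recl /= expr0 mulr1 big1 ?addr0 // => i _; by rewrite mul0r.
Qed.

Lemma dense rho r : 0 <= rho -> rho < r -> exists x, rho < v x /\ v x < r.
Proof.
move=> rho0 rr.
have r0 : 0 < r by exact: le_lt_trans rr.
have [y vy0 vy1] : exists2 y, 0 < v y & v y < 1.
  have [y [h0 h1]] := absv_nontrivial v.
  have yp : 0 < v y by rewrite lt_def h0 absv_ge0.
  have [lt|gt] := ltP (v y) 1; first by exists y.
  exists y^-1; rewrite vV ?invr_gt0 //.
  by rewrite invf_lt1 // lt_def h1 gt.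
set th := rho / r.
have th0 : 0 <= th by rewrite divr_ge0 // ltW.
have th1 : th < 1 by rewrite ltr_pdivrMr // mul1r.
have [n hn] := geo th0 th1 vy0.
have n0 : (0 < n)%N by case: n hn => //; rewrite expr0 => h; move: (lt_trans h vy1); rewrite ltxx.
have [u hu] := nth_root y n0.
set la := v u.
have lan : la ^+ n = v y by rewrite /la -vX hu.
have la0 : 0 <= la by exact: absv_ge0.
have lath : th < la.
  rewrite ltNge; apply/negP => h.
  have := lerX_nn n la0 h; rewrite lan => h'; move: (le_lt_trans h' hn); by rewrite ltxx.
have la1 : la < 1.
  rewrite ltNge; apply/negP => h; have := exprn_ege1 n h; rewrite lan => h'.
  by move: (le_lt_trans h' vy1); rewrite ltxx.
have lap : 0 < la by exact: le_lt_trans lath.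
have u0 : u != 0 by apply/eqP => e; move: lap; rewrite /la e v0 ltxx.
have r10 : 0 < r^-1 by rewrite invr_gt0.
have [N2 hN2] := geo la0 la1 r10.
have laN2 : 0 < la ^+ N2 by rewrite exprn_gt0.
have [m0 hm0] := geo la0 la1 (mulr_gt0 r0 laN2).
have ex : exists m, la ^+ m < r * la ^+ N2 by exists m0.
case: (ex_minnP ex) => m hm hmin.
have m1 : (0 < m)%N.
  case: m hm {hmin} => // h; rewrite expr0 in h.
  have : r * la ^+ N2 < r * r^-1 by rewrite ltr_pM2l.
  rewrite mulfV ?gt_eqF // => h'; move: (lt_trans h h'); by rewrite ltxx.
have hm1 : r * la ^+ N2 <= la ^+ m.-1.
  rewrite leNgt; apply/negP => h; have := hmin _ h; rewrite -ltnS prednK // ltnn.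
  by [].
exists (u ^+ m / u ^+ N2); rewrite v_div !vX -/la; split.
  rewrite ltr_pdivlMr //.
  have e1 : la ^+ m = la * la ^+ m.-1 by rewrite -exprS prednK.
  rewrite e1; apply: lt_le_trans (_ : la * (r * la ^+ N2) <= _); last first.
    by apply: ler_wpM2l.
  rewrite mulrA ltr_pM2r //.
  by move: lath; rewrite /th ltr_pdivrMr.
by rewrite ltr_pdivrMr.
Qed.

End Dense.

Section Misc.
Variables (R : realType) (K : fieldType) (v : nonarch_absval R K).

Lemma cvgB u1 u2 l1 l2 : av_cvg v u1 l1 -> av_cvg v u2 l2 ->
  av_cvg v (fun n => u1 n - u2 n) (l1 - l2).
Proof.
move=> h1 h2 e e0; have [N1 H1] := h1 e e0; have [N2 H2] := h2 e e0.
exists (maxn N1 N2) => n hn.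
have -> : u1 n - u2 n - (l1 - l2) = (u1 n - l1) - (u2 n - l2) by ring.
apply: vD_lt; rewrite ?vN.
  by apply: H1; exact: leq_trans (leq_maxl _ _) hn.
by apply: H2; exact: leq_trans (leq_maxr _ _) hn.
Qed.

Lemma cauchy_of_steps (A : nat -> K) :
  (forall e, 0 < e -> exists K0, forall k, (K0 <= k)%N -> v (A k.+1 - A k) < e) -> av_cauchy v A.
Proof.
move=> dsmall e e0; have [K0 hK0] := dsmall e e0.
have key : forall n j, (K0 <= n)%N -> v (A (n + j)%N - A n) < e.
  move=> n; elim=> [|jj IH] Kn; first by rewrite addn0 subrr v0.
  have -> : A (n + jj.+1)%N - A n = (A (n + jj).+1 - A (n + jj)%N) + (A (n + jj)%N - A n).
    by rewrite addnS addrA subrK.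
  apply: vD_lt; last exact: IH.
  apply: hK0; exact: leq_trans Kn (leq_addr _ _).
exists K0 => m n Km Kn; have [nm|mn] := leqP n m.
  by rewrite -(subnKC nm); apply: key.
by rewrite vB -(subnKC (ltnW mn)); apply: key.
Qed.

Lemma v_eq0_of_small x : (forall e, 0 < e -> v x < e) -> x = 0.
Proof.
move=> h; apply/eqP; apply/negPn/negP => hx.
have := h _ (v_neq0 v hx); by rewrite ltxx.
Qed.

End Misc.

Lemma ps_nat (K : closedFieldType) (b : nat -> K) x n : ps b x n = \sum_(0 <= i < n) b i * x ^+ i.
Proof. by rewrite /ps big_mkord. Qed.

Theorem lemma4p2 (R : realType) (K : closedFieldType)
  (v : nonarch_absval R K)
  (Hchar0 : [pchar K] =i pred0)
  (Hcomplete : av_complete v)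
  (a : K) (r : R) (hr : 0 < r)
  (c : nat -> K) (F : K -> K)
  (HF : forall z, disc v a r z -> av_cvg v (psum c a z) (F z))
  (HF' : forall z, disc v a r z -> ~ av_cvg v (psum (dcoef c) a z) 0) :
  (forall z, disc v a (kappa v * r) z ->
     disc v (c 0%N) (v (c 1%N) * kappa v * r) (F z)) /\
  (forall z1 z2, disc v a (kappa v * r) z1 -> disc v a (kappa v * r) z2 ->
     F z1 = F z2 -> z1 = z2) /\
  (forall w, disc v (c 0%N) (v (c 1%N) * kappa v * r) w ->
     exists2 z, disc v a (kappa v * r) z & F z = w).
Proof.
have [k0 k1 kb] := kappa_spec v Hchar0.
set k := kappa v in k0 k1 kb *.
have HFx : forall x, v x < r -> av_cvg v (ps c x) (F (x + a)).
  move=> x hx; have := HF (x + a); rewrite /disc addrK => /(_ hx).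
  by rewrite /psum addrK.
have HF'x : forall x, v x < r -> ~ av_cvg v (ps (dcoef c) x) 0.
  move=> x hx; have := HF' (x + a); rewrite /disc addrK => /(_ hx).
  by rewrite /psum addrK.
have v0r : v (0 : K) < r by rewrite v0.
have Fa : F (0 + a) = c 0%N.
  apply: (cvg_uniq (HFx 0 v0r)) => e e0; exists 1%N => n n1.
  by rewrite -(prednK n1) ps0 subrr v0.
have c10 : c 1%N != 0.
  apply/negP => /eqP c1; apply: (HF'x 0 v0r) => e e0; exists 1%N => n n1.
  by rewrite -(prednK n1) ps0 /dcoef c1 mulr0 subrr v0.
have vc1 : 0 < v (c 1%N) by apply: v_neq0.
have PartI : forall x, 0 < v x -> v x < r ->
    forall i, v (dcoef c i) * v x ^+ i <= v (dcoef c 0%N).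
  move=> x x0 xr.
  have tc := terms_of_cvg (HFx x xr).
  have tb : tends0 (fun n => v (dcoef c n) * v x ^+ n).
    move=> e e0; have [N hN] := tc (e * v x) (mulr_gt0 e0 x0).
    exists N => n Nn; have h := hN n.+1 (leqW Nn).
    rewrite exprSr mulrA ltr_pM2r // in h.
    apply: le_lt_trans h; rewrite /dcoef absvM; apply: ler_wpM2r; first by rewrite exprn_ge0 ?absv_ge0.
    rewrite -[X in _ <= X]mul1r; apply: ler_wpM2r; [exact: absv_ge0 | exact: v_nat].
  move=> i; rewrite leNgt; apply/negP => hi.
  have [al als hal] := root_exists Hcomplete x0 tb (ex_intro _ i hi).
  exact: (HF'x al (le_lt_trans als xr) hal).
have d0 : v (dcoef c 0%N) = v (c 1%N) by rewrite /dcoef mul1r.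
have KB : forall rho, 0 <= rho -> rho < k * r -> exists2 th, 0 <= th /\ th < 1 &
    forall i, (2 <= i)%N -> v (c i) * rho ^+ i.-1 <= th * v (c 1%N).
  move=> rho rho0 rhokr.
  have rk0 : 0 <= rho / k by rewrite divr_ge0 // ltW.
  have rkr : rho / k < r by rewrite ltr_pdivrMr // mulrC.
  have [x [hx1 hx2]] := dense v rk0 rkr.
  set s := v x in hx1 hx2.
  have s0 : 0 < s by exact: le_lt_trans hx1.
  have ks0 : 0 < k * s by rewrite mulr_gt0.
  have ks : rho < k * s by move: hx1; rewrite ltr_pdivrMr // mulrC.
  set th := rho / (k * s).
  have th0 : 0 <= th by rewrite divr_ge0 // ltW.
  have th1 : th < 1 by rewrite ltr_pdivrMr // mul1r.
  exists th => // i i2.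
  have i0 : (0 < i)%N by exact: ltnW.
  have hI := PartI x s0 hx2 i.-1.
  rewrite d0 /dcoef prednK // absvM in hI.
  have hk := kb i i0.
  have erho : rho = th * (k * s) by rewrite /th divfK ?gt_eqF.
  have erho2 : rho ^+ i.-1 = th ^+ i.-1 * (k ^+ i.-1 * s ^+ i.-1) by rewrite -!exprMn -erho.
  rewrite erho2.
  have thi : th ^+ i.-1 <= th.
    rewrite -[X in _ <= X]expr1; apply: ler_wiXn2l => //; first exact: ltW.
    by rewrite -ltnS prednK.
  have h1 : v (c i) * (k ^+ i.-1 * s ^+ i.-1) <= v (c 1%N).
    apply: le_trans hI; rewrite mulrA [v i%:R * _]mulrC -mulrA -mulrA; apply: ler_wpM2l; first exact: absv_ge0.
    by apply: ler_wpM2r => //; rewrite exprn_ge0 // ltW.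
  have h2 : th ^+ i.-1 * (v (c i) * (k ^+ i.-1 * s ^+ i.-1)) <= th * v (c 1%N).
    have p1 : 0 <= th ^+ i.-1 by exact: exprn_ge0.
    have p2 : 0 <= v (c i) * (k ^+ i.-1 * s ^+ i.-1).
      by rewrite mulr_ge0 ?absv_ge0 // mulr_ge0 // exprn_ge0 // ltW.
    exact: ler_pM p1 p2 thi h1.
  apply: le_trans h2; rewrite le_eqVlt; apply/orP; left; apply/eqP; ring.
have LL : forall rho th, 0 <= th -> rho < r ->
    (forall i, (2 <= i)%N -> v (c i) * rho ^+ i.-1 <= th * v (c 1%N)) ->
    forall x y, v x <= rho -> v y <= rho ->
    v (F (y + a) - F (x + a) - c 1%N * (y - x)) <= th * v (c 1%N) * v (y - x).
  move=> rho th th0 rhor hb x y xr yr.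
  have rho0 : 0 <= rho by exact: le_trans (absv_ge0 v x) xr.
  have hc := cvgB (HFx y (le_lt_trans yr rhor)) (HFx x (le_lt_trans xr rhor)).
  apply: (lim_le (N := 2%N) hc) => n n2.
  have e : ps c y n - ps c x n - c 1%N * (y - x) = \sum_(2 <= i < n) c i * (y ^+ i - x ^+ i).
    rewrite !ps_nat !(big_ltn (ltnW n2)) !(big_ltn n2) /= !expr0 !expr1 !mulr1.
    rewrite [RHS](eq_bigr (fun i => c i * y ^+ i - c i * x ^+ i)) => [|i _]; last by rewrite mulrBr.
    rewrite sumrB; ring.
  rewrite e big_nat_cond; apply: v_sum.
    by rewrite !mulr_ge0 ?absv_ge0.
  move=> i; rewrite andbT => /andP[i2 _].
  rewrite absvM; apply: le_trans (_ : v (c i) * (v (y - x) * rho ^+ i.-1) <= _).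
    apply: ler_wpM2l; first exact: absv_ge0.
    exact: powdiff.
  rewrite mulrCA [X in _ <= X]mulrC; apply: ler_wpM2l; first exact: absv_ge0.
  exact: hb.
have krr : k * r <= r by rewrite -[X in _ <= X]mul1r ler_wpM2r // ltW.
have LL2 : forall rho th, 0 <= th -> th < 1 -> rho < r ->
    (forall i, (2 <= i)%N -> v (c i) * rho ^+ i.-1 <= th * v (c 1%N)) ->
    forall x y, v x <= rho -> v y <= rho ->
    v (F (y + a) - F (x + a)) <= v (c 1%N) * v (y - x).
  move=> rho th th0 th1 rhor hb x y xr yr.
  have h := LL rho th th0 rhor hb x y xr yr.
  have -> : F (y + a) - F (x + a) = (F (y + a) - F (x + a) - c 1%N * (y - x)) + c 1%N * (y - x).
    by rewrite subrK.
  apply: vD_le; last by rewrite absvM.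
  apply: le_trans h _; rewrite -mulrA; rewrite -[X in _ <= X]mul1r; apply: ler_wpM2r.
    by rewrite mulr_ge0 ?absv_ge0.
  exact: ltW.
split.
  move=> z; rewrite /disc => hz.
  set x := z - a in hz; have ez : z = x + a by rewrite subrK.
  have [th [th0 th1] hb] := KB (v x) (absv_ge0 v x) hz.
  have v0x : v 0 <= v x by rewrite v0 absv_ge0.
  have h := LL2 (v x) th th0 th1 (lt_le_trans hz krr) hb 0 x v0x (lexx _).
  rewrite Fa -ez subr0 in h.
  apply: le_lt_trans h _; rewrite -mulrA ltr_pM2l //.
split.
  move=> z1 z2; rewrite /disc => hz1 hz2 eF.
  set x1 := z1 - a in hz1; set x2 := z2 - a in hz2.
  have ez1 : z1 = x1 + a by rewrite subrK.
  have ez2 : z2 = x2 + a by rewrite subrK.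
  set rho := Num.max (v x1) (v x2).
  have rho0 : 0 <= rho by rewrite le_max absv_ge0.
  have rhokr : rho < k * r by rewrite gt_max hz1 hz2.
  have [th [th0 th1] hb] := KB rho rho0 rhokr.
  have m1 : v x1 <= rho by rewrite le_max lexx.
  have m2 : v x2 <= rho by rewrite le_max lexx orbT.
  have h := LL rho th th0 (lt_le_trans rhokr krr) hb x1 x2 m1 m2.
  rewrite -ez1 -ez2 eF subrr sub0r vN absvM in h.
  have dd0 : x2 - x1 = 0.
    apply/eqP; apply/negPn/negP => hd.
    have p : 0 < v (c 1%N) * v (x2 - x1) by rewrite mulr_gt0 // v_neq0.
    rewrite -mulrA in h.
    have : th * (v (c 1%N) * v (x2 - x1)) < v (c 1%N) * v (x2 - x1).
      by rewrite -[X in _ < X]mul1r ltr_pM2r.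
    by move=> h'; move: (le_lt_trans h h'); rewrite ltxx.
  by rewrite ez1 ez2; move/eqP: dd0; rewrite subr_eq0 => /eqP ->.
move=> w; rewrite /disc => hw.
set C := v (w - c 0%N) in hw *.
have C0 : 0 <= C by exact: absv_ge0.
have Cc0 : 0 <= C / v (c 1%N) by rewrite divr_ge0 // ltW.
have Ckr : C / v (c 1%N) < k * r by rewrite ltr_pdivrMr // mulrC mulrA.
set rho := (C / v (c 1%N) + k * r) / 2.
have rho0 : 0 <= rho by rewrite /rho; lra.
have rhoC : C / v (c 1%N) <= rho by rewrite /rho; lra.
have rhokr : rho < k * r by rewrite /rho; lra.
have rhor : rho < r := lt_le_trans rhokr krr.
have [th [th0 th1] hb] := KB rho rho0 rhokr.
have c1n0 : c 1%N != 0 := c10.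
pose X := fix X n := if n is n'.+1 then X n' + (w - F (X n' + a)) / c 1%N else 0.
have XS : forall n, X n.+1 = X n + (w - F (X n + a)) / c 1%N by [].
have thn1 : forall n, th ^+ n <= 1 by move=> n; rewrite exprn_ile1 // ltW.
have Inv : forall n, v (X n) <= rho /\ v (w - F (X n + a)) <= th ^+ n * C.
  elim=> [|n [IH1 IH2]].
    by split; [rewrite /= v0 | rewrite /= Fa expr0 mul1r].
  set d := w - F (X n + a) in IH2.
  have vdc : v (d / c 1%N) <= th ^+ n * (C / v (c 1%N)).
    rewrite v_div ler_pdivrMr // mulrA divfK ?gt_eqF //.
  have vdc' : v (d / c 1%N) <= rho.
    apply: le_trans vdc _; apply: le_trans rhoC; rewrite -[X in _ <= X]mul1r.
    by apply: ler_wpM2r.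
  have Xn1 : v (X n.+1) <= rho by rewrite XS; apply: vD_le.
  split => //.
  have h := LL rho th th0 rhor hb (X n) (X n.+1) IH1 Xn1.
  have e1 : X n.+1 - X n = d / c 1%N by rewrite XS addrAC subrr add0r.
  rewrite e1 mulrC divfK // in h.
  have e2 : w - F (X n.+1 + a) = - (F (X n.+1 + a) - F (X n + a) - d).
    by rewrite /d opprB opprB addrA subrK.
  rewrite e2 vN; apply: le_trans h _.
  rewrite v_div -mulrA [v (c 1%N) * _]mulrCA divff ?gt_eqF // mulr1 exprS -mulrA.
  by apply: ler_wpM2l.
have steps : forall n, v (X n.+1 - X n) <= th ^+ n * (C / v (c 1%N)).
  move=> n; have [_ IH2] := Inv n.
  rewrite XS addrAC subrr add0r v_div ler_pdivrMr // mulrA divfK ?gt_eqF //.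
have cau : av_cauchy v X.
  apply: cauchy_of_steps => e e0.
  have e'0 : 0 < e / (C / v (c 1%N) + 1) by rewrite divr_gt0 //; lra.
  have [N hN] := geo th0 th1 e'0.
  exists N => n Nn; apply: le_lt_trans (steps n) _.
  have hn : th ^+ n <= th ^+ N by apply: ler_wiXn2l => //; exact: ltW.
  apply: le_lt_trans (_ : th ^+ N * (C / v (c 1%N) + 1) < e).
    apply: ler_pM; rewrite ?exprn_ge0 //; lra.
  by rewrite -ltr_pdivlMr //; lra.
have [Xs hXs] := Hcomplete X cau.
have Xsr : v Xs <= rho.
  rewrite -(subr0 Xs); apply: (lim_le (N := 0%N) hXs) => n _; rewrite subr0.
  by case: (Inv n).
exists (Xs + a); first by rewrite /disc addrK; exact: le_lt_trans Xsr rhokr.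
apply/eqP; rewrite eq_sym -subr_eq0; apply/eqP; apply: (v_eq0_of_small (v := v)) => e e0.
have e'0 : 0 < e / (C + 1) by rewrite divr_gt0 //; lra.
have [N1 hN1] := geo th0 th1 e'0.
have e''0 : 0 < e / v (c 1%N) by rewrite divr_gt0.
have [N2 hN2] := hXs _ e''0.
set n := maxn N1 N2.
have [In1 In2] := Inv n.
have -> : w - F (Xs + a) = (w - F (X n + a)) + (F (X n + a) - F (Xs + a)) by rewrite addrA subrK.
apply: vD_lt.
  apply: le_lt_trans In2 _.
  have hn : th ^+ n <= th ^+ N1 by apply: ler_wiXn2l => //; [exact: ltW | exact: leq_maxl].
  apply: le_lt_trans (_ : th ^+ N1 * (C + 1) < e).
    apply: ler_pM; rewrite ?exprn_ge0 //; lra.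
  by rewrite -ltr_pdivlMr //; lra.
apply: le_lt_trans (LL2 rho th th0 th1 rhor hb Xs (X n) Xsr In1) _.
rewrite -ltr_pdivlMl // mulrC; apply: hN2; exact: leq_maxr.
Qed.
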